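(* Let $D$ be a squarefree integer and $q>3$ a prime not dividing $D$. Then $H_D^{(q)}\subset E^{(1)}(\mathbb{Q})$ depends only on the Legendre symbol $(D/q)$; denote it $H^{(q),(D/q)}$. Let $O_q$ be the order of the reduction of $P$ in $E^{(1)}(\mathbb{F}_q)$. Then there exist subsets $M_1^{(q)}$ and $M_{-1}^{(q)}$ of $\mathbb{Z}/O_q\mathbb{Z}$ such that $H^{(q),(D/q)}=\{kP : k\text{ odd and } k\equiv m\pmod{O_q}\text{ for some } m\in M_{(D/q)}^{(q)}\}$. Moreover, $1\in M_1^{(q)}$, and for $\varepsilon=\pm1$, if $k\in M_\varepsilon^{(q)}$ then $-k\in M_\varepsilon^{(q)}$.
   Context: $C_D\subset\mathbb{P}^4$ is the curve over $\mathbb{Q}$ given by $X_0^2-2X_1^2+X_2^2=0$, $X_1^2-2X_2^2+DX_3^2=0$, $X_2^2-2DX_3^2+X_4^2=0$, and $C_D(\mathbb{F}_q)$ the $\mathbb{F}_q$-points of its reduction. $E^{(1)}: y^2=x(x+2)(x+6)$, $P=(6,24)$, $H=\{kP: k\text{ odd}\}$, $\phi:C_D\to E^{(1)}$ is $\phi([x_0:\dots:x_4])=(6x_0^2/x_4^2,\,24x_0x_1x_2/x_4^3)$ with reduction $\phi_q$, $\mathrm{red}_q$ is reduction mod $q$ on $E^{(1)}(\mathbb{Q})$, and $H_D^{(q)}:=\{R\in H : \mathrm{red}_q(R)\in\phi_q(C_D(\mathbb{F}_q))\}$. *)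

(* Defs.v *)
From HB Require Import structures.
From mathcomp Require Import all_boot all_order all_algebra.
Set Implicit Arguments. Unset Strict Implicit. Unset Printing Implicit Defensive.
Import Order.TTheory GRing.Theory Num.Theory.
Local Open Scope ring_scope.

(* Points of the Weierstrass curve E^(1): y^2 = x^3 + 8 x^2 + 12 x
   (= x(x+2)(x+6)) over a field K: None is the point at infinity O,
   Some (x, y) an affine point. *)
Definition pt (K : Type) := option (K * K).

Section Curve.
Variable K : fieldType.

Definition a2 : K := 8%:R.
Definition a4 : K := 12%:R.

Definition negpt (P : pt K) : pt K :=
  match P with None => None | Some (x, y) => Some (x, - y) end.

Definition addpt (P Q : pt K) : pt K :=
  match P, Q with
  | None, _ => Q
  | _, None => P
  | Some (x1, y1), Some (x2, y2) =>
      if (x1 == x2) && (y1 == - y2) then None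
      else
        let l := if x1 == x2
                 then (3%:R * x1 ^+ 2 + 2%:R * a2 * x1 + a4) / (2%:R * y1)
                 else (y2 - y1) / (x2 - x1) in
        let x3 := l ^+ 2 - a2 - x1 - x2 in
        Some (x3, - (y1 + l * (x3 - x1)))
  end.

Definition mulpt (k : int) (P : pt K) : pt K :=
  match k with
  | Posz n => iter n (addpt P) None
  | Negz n => negpt (iter n.+1 (addpt P) None)
  end.
End Curve.

Definition P0 : pt rat := Some (6%:R, 24%:R).

Definition oddz (k : int) : bool := ~~ (2 %| k)%Z.
Definition inH (R : pt rat) : Prop := exists k : int, oddz k /\ R = mulpt k P0.

Arguments mulpt {K}.
Definition ratF (q : nat) (r : rat) : 'F_q := (numq r)%:~R / (denq r)%:~R.
Definition redq (q : nat) (R : pt rat) : pt 'F_q :=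
  match R with
  | None => None
  | Some (x, y) => if (q%:Z %| denq x)%Z then None else Some (ratF q x, ratF q y)
  end.

(* phi_q : C_D(F_q) -> E^(1)(F_q), [x0:...:x4] |-> (6x0^2/x4^2, 24x0x1x2/x4^3);
   at the points with x4 = 0 (where necessarily x0 <> 0) the morphism takes
   the value O. *)
#[local] Unset Implicit Arguments.
Definition phiq (q : nat) (x0 x1 x2 x4 : 'F_q) : pt 'F_q :=
  if x4 == 0 then None
  else Some (6%:R * x0 ^+ 2 / x4 ^+ 2, 24%:R * x0 * x1 * x2 / x4 ^+ 3).

(* (x0,...,x4) is a (nonzero) representative of a point of C_D(F_q) *)
Definition onCD (q : nat) (D : int) (x0 x1 x2 x3 x4 : 'F_q) : bool :=
  [|| x0 != 0, x1 != 0, x2 != 0, x3 != 0 | x4 != 0] &&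
  [&& x0 ^+ 2 - 2%:R * x1 ^+ 2 + x2 ^+ 2 == 0,
      x1 ^+ 2 - 2%:R * x2 ^+ 2 + D%:~R * x3 ^+ 2 == 0 &
      x2 ^+ 2 - 2%:R * D%:~R * x3 ^+ 2 + x4 ^+ 2 == 0].

Definition imphi (q : nat) (D : int) (S : pt 'F_q) : Prop :=
  exists x0 x1 x2 x3 x4 : 'F_q, onCD q D x0 x1 x2 x3 x4 /\ S = phiq q x0 x1 x2 x4.

Definition HDq (q : nat) (D : int) (R : pt rat) : Prop :=
  inH R /\ imphi q D (redq q R).

Definition squarefreez (D : int) : Prop :=
  forall n : nat, (1 < n)%N -> ~~ ((n%:Z) ^+ 2 %| D)%Z.

Definition legendre (q : nat) (D : int) : int :=
  if (q%:Z %| D)%Z then 0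
  else if [exists x : 'F_q, x ^+ 2 == D%:~R] then 1 else -1.

Definition is_orderP (q O : nat) : Prop :=
  (0 < O)%N /\ mulpt O%:Z (redq q P0) = None /\
  forall n : nat, (0 < n < O)%N -> mulpt n%:Z (redq q P0) <> None.

(* Main.v *)
Require Import Defs.
From HB Require Import structures.
From mathcomp Require Import all_boot all_order all_algebra all_fingroup all_solvable all_field.
From mathcomp Require Import ring lra zify.
Set Implicit Arguments. Unset Strict Implicit. Unset Printing Implicit Defensive.
Import Order.TTheory GRing.Theory Num.Theory.
Local Open Scope ring_scope.

Lemma sqclass (F : finFieldType) (a b : F) :
  ~~ [exists x, x ^+ 2 == a] -> ~~ [exists x, x ^+ 2 == b] ->
  exists c : F, c != 0 /\ a = b * c ^+ 2.
Proof.
move: (field_unit_group_cyclic [group of [set: {unit F}]]) => /cyclicP [g hg].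
have g0 : FinRing.uval g != 0 by rewrite -unitfE; case: g {hg}.
have nz (z : F) : ~~ [exists x, x ^+ 2 == z] -> z != 0.
  move=> h; apply/eqP => z0; move/negP: h; apply; apply/existsP; exists 0.
  by rewrite z0 expr0n.
have pw (z : F) : ~~ [exists x, x ^+ 2 == z] ->
    exists i, z = FinRing.uval g * FinRing.uval g ^+ (2 * i).
  move=> nsq.
  have uz : z \is a GRing.unit by rewrite unitfE nz.
  have : FinRing.Unit uz \in <[g]>%g by rewrite -hg inE.
  case/cycleP => i hi.
  have hz : z = (FinRing.uval g) ^+ i by rewrite -FinRing.val_unitX -hi.
  case: (boolP (odd i)) => oi.
    exists i./2.
    rewrite hz -exprS; congr (_ ^+ _).
    by move: (odd_double_half i); rewrite oi -muln2 => <-; lia.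
  exfalso; move/negP: nsq; apply; apply/existsP; exists (FinRing.uval g ^+ i./2).
  rewrite -exprM hz; apply/eqP; congr (_ ^+ _).
  by move: (odd_double_half i); rewrite (negbTE oi) -muln2 => <-; lia.
move=> ha hb.
case: (pw a ha) => i ea; case: (pw b hb) => j eb.
exists (FinRing.uval g ^+ i / FinRing.uval g ^+ j); split.
  by rewrite mulf_neq0 ?invr_eq0 ?expf_neq0.
rewrite ea eb !(mulnC 2) !exprM.
have := expf_neq0 j g0; move: (FinRing.uval g ^+ j) (FinRing.uval g ^+ i) => B A B0.
by field.
Qed.
Section Gen.
Variable K : fieldType.
Definition fc (x : K) := x ^+ 3 + a2 K * x ^+ 2 + a4 K * x.
Definition gc (a c : K) := c ^+ 2 + c * a + a ^+ 2 + a2 K * (c + a) + a4 K.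
Definition oncurve (P : pt K) : Prop :=
  match P with None => True | Some (x, y) => y ^+ 2 = fc x end.

Lemma line_on (a b c l : K) : b ^+ 2 = fc a ->
  2%:R * b * l + l ^+ 2 * (c - a) = gc a c ->
  oncurve (Some (l ^+ 2 - a2 K - a - c, - (b + l * ((l ^+ 2 - a2 K - a - c) - a)))).
Proof.
move=> hA hH /=; apply/eqP; rewrite -subr_eq0.
set x3 := l ^+ 2 - a2 K - a - c.
have -> : (- (b + l * (x3 - a))) ^+ 2 - fc x3 =
  (b ^+ 2 - fc a) + (x3 - a) * (2%:R * b * l + l ^+ 2 * (c - a) - gc a c).
  by rewrite /x3 /fc /gc; ring.
by rewrite hA hH !subrr mulr0 addr0.
Qed.

Lemma chord_rel (a b c d : K) : b ^+ 2 = fc a -> d ^+ 2 = fc c -> a != c ->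
  2%:R * b * ((d - b) / (c - a)) + ((d - b) / (c - a)) ^+ 2 * (c - a) = gc a c.
Proof.
move=> hA hB ac.
have ca0 : c - a != 0 by rewrite subr_eq0 eq_sym.
set l := (d - b) / (c - a).
have hl : l * (c - a) = d - b by rewrite /l divfK.
apply: (mulfI ca0).
have -> : (c - a) * (2%:R * b * l + l ^+ 2 * (c - a)) =
   2%:R * b * (l * (c - a)) + (l * (c - a)) ^+ 2 by ring.
rewrite hl.
have -> : 2%:R * b * (d - b) + (d - b) ^+ 2 = d ^+ 2 - b ^+ 2 by ring.
by rewrite hA hB /fc /gc; ring.
Qed.

Lemma sq_eq (b d : K) : d ^+ 2 = b ^+ 2 -> d = b \/ d = - b.
Proof.
move=> h; have : (d - b) * (d + b) = 0 by rewrite -subr_sqr h subrr.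
move/eqP; rewrite mulf_eq0 => /orP [|]; rewrite ?subr_eq0 ?addr_eq0 => /eqP; by [left|right].
Qed.

Lemma addpt_on (A B : pt K) : oncurve A -> oncurve B -> oncurve (addpt A B).
Proof.
case: A => [[a b]|] //; case: B => [[c d]|] // hA hB /=.
case: ifP => // /negbT ht.
case: ifP => [/eqP ac|ac].
  subst c.
  have db : d = b.
    case: (sq_eq (b := b) (d := d)); first by rewrite hA hB.
      by [].
    by move=> e; move: ht; rewrite e opprK !eqxx.
  subst d.
  have b2 : 2%:R * b != 0.
    apply/eqP => h; move: ht; rewrite eqxx /=; apply/negP; apply/negPn.
    by rewrite -addr_eq0 -mulr2n -mulr_natl h.
  apply: line_on => //; rewrite subrr mulr0 addr0 mulrC divfK //.
  by rewrite /gc /a2 /a4; ring.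
by apply: line_on => //; apply: chord_rel => //; rewrite ac.
Qed.

Lemma negpt_add (A B : pt K) : negpt (addpt A B) = addpt (negpt A) (negpt B).
Proof.
case: A => [[a b]|] //; case: B => [[c d]|] //=.
have -> : (- b == - - d) = (b == - d) by rewrite opprK eqr_oppLR.
case: ifP => //= _; case: ifP => _.
  rewrite mulrN invrN mulrN sqrrN; congr (Some (_, _)); ring.
have -> : (- d - - b) / (c - a) = - ((d - b) / (c - a)) by rewrite -mulNr; congr (_ * _); ring.
rewrite sqrrN; congr (Some (_, _)); ring.
Qed.

Lemma back (a b c l : K) : b ^+ 2 = fc a ->
  2%:R * b * l + l ^+ 2 * (c - a) = gc a c -> 2%:R * b != 0 ->
  addpt (Some (a, - b)) (Some (l ^+ 2 - a2 K - a - c, - (b + l * ((l ^+ 2 - a2 K - a - c) - a))))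
  = Some (c, b + l * (c - a)).
Proof.
move=> hA hH b2.
set x3 := l ^+ 2 - a2 K - a - c.
rewrite /addpt.
case: (boolP (a == x3)) => [/eqP ax|ax] /=.
  have bb : (- b == - - (b + l * (x3 - a))) = false.
    rewrite opprK -ax subrr mulr0 addr0; apply/negP => /eqP h.
    by move/eqP: b2; apply; rewrite mulr2n mulrDl mul1r -{1}h addNr.
  rewrite bb.
  have l2 : l ^+ 2 = a2 K + 2%:R * a + c.
    apply/eqP; rewrite -subr_eq0; apply/eqP.
    have h0 : x3 - a = 0 by rewrite ax subrr.
    by rewrite -[RHS]h0 /x3; ring.
  have hl : (3%:R * a ^+ 2 + 2%:R * a2 K * a + a4 K) / (2%:R * - b) = - l.
    rewrite mulrN invrN mulrN; congr (- _).
    apply: (mulIf b2); rewrite divfK //.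
    have : 2%:R * b * l = gc a c - l ^+ 2 * (c - a) by rewrite -hH; ring.
    rewrite [in X in X -> _]l2 mulrC => ->; rewrite /gc; ring.
  rewrite hl sqrrN l2 -ax; congr (Some (_, _)); ring.
have hl : (- (b + l * (x3 - a)) - - b) / (x3 - a) = - l.
  have xa : x3 - a != 0 by rewrite subr_eq0 eq_sym.
  apply: (mulIf xa); rewrite divfK //; ring.
rewrite hl sqrrN; congr (Some (_, _)); rewrite /x3; ring.
Qed.

Lemma cancel_add (a b : K) (Y : pt K) : b ^+ 2 = fc a -> oncurve Y -> 2%:R * b != 0 ->
  addpt (Some (a, - b)) (addpt (Some (a, b)) Y) = Y.
Proof.
move=> hA; case: Y => [[c d]|] hB b2; last by rewrite /= !eqxx.
case: (boolP ((a == c) && (b == - d))) => ht.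
  rewrite [addpt (Some (a, b)) _]/addpt ht.
  by case/andP: ht => /eqP <- /eqP ->; rewrite /= opprK.
case: (boolP (a == c)) => ac; rewrite [addpt (Some (a, b)) _]/addpt (negbTE ht) ?ac.
  move/eqP: ac => ac; subst c.
  have db : d = b.
    case: (sq_eq (b := b) (d := d)); first by rewrite hA hB.
      by [].
    by move=> e; move: ht; rewrite e opprK !eqxx.
  subst d.
  rewrite back //.
    by rewrite subrr mulr0 addr0.
  rewrite subrr mulr0 addr0 mulrC divfK //.
  by rewrite /gc /a2 /a4; ring.
rewrite (negbTE ac) back //; last by apply: chord_rel.
have ca0 : c - a != 0 by rewrite subr_eq0 eq_sym.
by rewrite divfK // addrC subrK.
Qed.
End Gen.
Section Fq.
Variable q : nat.
Hypothesis q_prime : prime q.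
Hypothesis q_gt3 : (3 < q)%N.

Lemma Fq_nat0 (n : nat) : ((n%:R : 'F_q) == 0) = (q %| n)%N.
Proof.
apply/eqP/idP => [h|h].
  by have := val_Fp_nat q_prime n; rewrite h /= => /esym/eqP; rewrite -/(dvdn q n).
by apply/val_inj; rewrite /= val_Fp_nat //; apply/eqP.
Qed.

Lemma Fq_int0 (d : int) : ((d%:~R : 'F_q) == 0) = (q%:Z %| d)%Z.
Proof.
case: d => n; first by rewrite Fq_nat0 dvdzE.
by rewrite NegzE mulrNz oppr_eq0 Fq_nat0 dvdzE abszN.
Qed.

Lemma Fq_small (n : nat) : (0 < n < 4)%N -> (n%:R : 'F_q) != 0.
Proof.
move=> /andP[h0 h4]; rewrite Fq_nat0; apply/negP => /(dvdn_leq h0); lia.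
Qed.

Definition Zq (r : rat) : bool := ~~ (q%:Z %| denq r)%Z.
Definition Rd (r : rat) (s : 'F_q) := Zq r /\ ratF q r = s.

Lemma Zq_den r : Zq r = ((denq r)%:~R != 0 :> 'F_q).
Proof. by rewrite Fq_int0. Qed.

Lemma not_both (n d : int) : coprime `|n| `|d| -> (q%:Z %| n)%Z -> (q%:Z %| d)%Z -> False.
Proof.
move=> co; rewrite !dvdzE /= => hn hd.
have : (q %| gcdn `|n| `|d|)%N by rewrite dvdn_gcd hn hd.
rewrite (eqP co) dvdn1 => /eqP q1; move: q_gt3; rewrite q1.
by [].
Qed.

Lemma key (n d : int) : (d%:~R : 'F_q) != 0 ->
  Rd (n%:~R / d%:~R) (n%:~R / d%:~R).
Proof.
move=> d0.
have dz : d != 0 by apply: contraNneq d0 => ->.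
have dQ : (d%:~R : rat) != 0 by rewrite intr_eq0.
set r := (n%:~R / d%:~R : rat).
have e : numq r * d = n * denq r.
  apply: (@intr_inj rat); rewrite !intrM numqE /r.
  by rewrite -mulrA (mulrC _ d%:~R) mulrA divfK.
have eF : ((numq r)%:~R * d%:~R : 'F_q) = n%:~R * (denq r)%:~R.
  by rewrite -!intrM e.
have den0 : ((denq r)%:~R : 'F_q) != 0.
  apply/negP => /eqP h0.
  move: eF; rewrite h0 mulr0 => /eqP; rewrite mulf_eq0 (negbTE d0) orbF Fq_int0 => hn.
  have hd : (q%:Z %| denq r)%Z by rewrite -Fq_int0 h0.
  exact: (not_both (coprime_num_den r) hn hd).
split; first by rewrite Zq_den.
rewrite /ratF; apply: (mulIf den0); rewrite divfK //.
apply: (mulIf d0); rewrite eF; field.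
by rewrite d0.
Qed.

Lemma Zq_repr r : Zq r -> r = (numq r)%:~R / (denq r)%:~R /\ ((denq r)%:~R : 'F_q) != 0.
Proof. by rewrite Zq_den => h; rewrite divq_num_den. Qed.

Lemma RZ (n : int) : Rd n%:~R n%:~R.
Proof.
have := key n (d := 1); rewrite !divr1; apply; exact: oner_neq0.
Qed.

Lemma Rnat (n : nat) : Rd n%:R n%:R.
Proof. exact: (RZ n). Qed.

Lemma Rfun r s : Rd r s -> s = ratF q r.
Proof. by case=> _ ->. Qed.

Lemma Rdecomp r s : Rd r s -> exists n d : int, [/\ r = n%:~R / d%:~R,
  (d%:~R : 'F_q) != 0 & s = n%:~R / d%:~R].
Proof.
case=> z <-; case: (Zq_repr z) => e d0; exists (numq r), (denq r); split => //.
Qed.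

Lemma RD a b s t : Rd a s -> Rd b t -> Rd (a + b) (s + t).
Proof.
move=> /Rdecomp [na [da [-> da0 ->]]] /Rdecomp [nb [db [-> db0 ->]]].
have daQ : (da%:~R : rat) != 0 by rewrite intr_eq0; apply: contraNneq da0 => ->.
have dbQ : (db%:~R : rat) != 0 by rewrite intr_eq0; apply: contraNneq db0 => ->.
have e1 : (na%:~R / da%:~R + nb%:~R / db%:~R : rat) = (na * db + nb * da)%:~R / (da * db)%:~R.
  by rewrite intrD !intrM; field; rewrite daQ dbQ.
have e2 : (na%:~R / da%:~R + nb%:~R / db%:~R : 'F_q) = (na * db + nb * da)%:~R / (da * db)%:~R.
  by rewrite intrD !intrM; field; rewrite da0 db0.
rewrite e1 e2; apply: key; by rewrite intrM mulf_neq0.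
Qed.

Lemma RM a b s t : Rd a s -> Rd b t -> Rd (a * b) (s * t).
Proof.
move=> /Rdecomp [na [da [-> da0 ->]]] /Rdecomp [nb [db [-> db0 ->]]].
have daQ : (da%:~R : rat) != 0 by rewrite intr_eq0; apply: contraNneq da0 => ->.
have dbQ : (db%:~R : rat) != 0 by rewrite intr_eq0; apply: contraNneq db0 => ->.
have e1 : (na%:~R / da%:~R * (nb%:~R / db%:~R) : rat) = (na * nb)%:~R / (da * db)%:~R.
  by rewrite !intrM; field; rewrite daQ dbQ.
have e2 : (na%:~R / da%:~R * (nb%:~R / db%:~R) : 'F_q) = (na * nb)%:~R / (da * db)%:~R.
  by rewrite !intrM; field; rewrite da0 db0.
rewrite e1 e2; apply: key; by rewrite intrM mulf_neq0.
Qed.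

Lemma RN a s : Rd a s -> Rd (- a) (- s).
Proof.
move=> h; have := RM (RZ (-1)) h; by rewrite !mulrN1z !mulN1r.
Qed.

Lemma RB a b s t : Rd a s -> Rd b t -> Rd (a - b) (s - t).
Proof. by move=> ha hb; apply: RD ha (RN hb). Qed.

Lemma RX2 a s : Rd a s -> Rd (a ^+ 2) (s ^+ 2).
Proof. by move=> h; rewrite !expr2; apply: RM. Qed.

Lemma RV a s : Rd a s -> s != 0 -> Rd (a ^-1) (s ^-1).
Proof.
move=> /Rdecomp [na [da [-> da0 ->]]] s0.
have na0 : (na%:~R : 'F_q) != 0 by apply: contraNneq s0 => ->; rewrite mul0r.
have naQ : (na%:~R : rat) != 0 by rewrite intr_eq0; apply: contraNneq na0 => ->.
have daQ : (da%:~R : rat) != 0 by rewrite intr_eq0; apply: contraNneq da0 => ->.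
rewrite !invf_div; exact: key.
Qed.

Lemma Rdiv a b s t : Rd a s -> Rd b t -> t != 0 -> Rd (a / b) (s / t).
Proof. by move=> ha hb t0; apply: RM ha (RV hb t0). Qed.

Lemma NI1 x : ~~ Zq x -> Rd (x ^-1) 0.
Proof.
move=> nz.
have hd : (q%:Z %| denq x)%Z by move: nz; rewrite /Zq negbK.
have hn : ~~ (q%:Z %| numq x)%Z.
  by apply/negP => hn; exact: (not_both (coprime_num_den x) hn hd).
rewrite -[x]divq_num_den invf_div.
have := key (denq x) (d := numq x); rewrite Fq_int0 => /(_ hn).
have -> : ((denq x)%:~R : 'F_q) = 0 by apply/eqP; rewrite Fq_int0.
by rewrite mul0r.
Qed.

Lemma NI2 r : r != 0 -> Rd (r ^-1) 0 -> ~~ Zq r.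
Proof.
move=> r0 hv; apply/negP => z.
have := RM (conj z erefl) hv; rewrite mulfV // mulr0 => h1.
have := Rfun h1; rewrite -(Rfun (Rnat 1)) => /eqP; by rewrite eq_sym oner_eq0.
Qed.

Lemma Zq0 : Zq 0.
Proof. by case: (Rnat 0). Qed.

Lemma NIsq w : ~~ Zq w -> ~~ Zq (w ^+ 2).
Proof.
move=> nz.
have w0 : w != 0 by apply/eqP => w0; move: nz; rewrite w0 Zq0.
apply: NI2; first by rewrite expf_neq0.
have := RX2 (NI1 nz); by rewrite exprVn expr0n.
Qed.

Lemma Zsq w : Zq (w ^+ 2) -> Zq w.
Proof. by move=> h; case: (boolP (Zq w)) => // /NIsq; rewrite h. Qed.

Lemma NIsub a b : ~~ Zq a -> Zq b -> ~~ Zq (a - b).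
Proof.
move=> na zb; apply/negP => zab.
have := RD (conj zab erefl) (conj zb erefl); rewrite subrK => -[za _].
by rewrite za in na.
Qed.

Lemma ratF_opp y : ratF q (- y) = - ratF q y.
Proof. by rewrite /ratF numqN denqN intrN mulNr. Qed.
End Fq.

Section AddE.
Variable K : fieldType.
Lemma addpt_chord (a b c d : K) : a != c ->
  addpt (Some (a, b)) (Some (c, d)) =
  Some (((d - b) / (c - a)) ^+ 2 - a2 K - a - c,
        - (b + (d - b) / (c - a) * (((d - b) / (c - a)) ^+ 2 - a2 K - a - c - a))).
Proof. by move=> ac; rewrite /addpt (negbTE ac). Qed.

Lemma addpt_tan (a b : K) : (b == - b) = false ->
  addpt (Some (a, b)) (Some (a, b)) =
  let l := (3%:R * a ^+ 2 + 2%:R * a2 K * a + a4 K) / (2%:R * b) in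
  Some (l ^+ 2 - a2 K - a - a, - (b + l * (l ^+ 2 - a2 K - a - a - a))).
Proof. by move=> bb; rewrite /addpt eqxx bb. Qed.

Lemma addpt_inv (a b d : K) : b = - d -> addpt (Some (a, b)) (Some (a, d)) = None.
Proof. by move=> ->; rewrite /addpt !eqxx. Qed.
End AddE.

Section Red.
Variable q : nat.
Hypothesis q_prime : prime q.
Hypothesis q_gt3 : (3 < q)%N.
Local Notation F := ('F_q).
Local Notation Rnat := (Rnat q_prime q_gt3).
Local Notation RD := (RD q_prime q_gt3).
Local Notation RB := (RB q_prime q_gt3).
Local Notation RM := (RM q_prime q_gt3).
Local Notation RN := (RN q_prime q_gt3).
Local Notation RV := (RV q_prime q_gt3).
Local Notation RX2 := (RX2 q_prime q_gt3).
Local Notation Rdiv := (Rdiv q_prime q_gt3).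
Local Notation NI1 := (NI1 q_prime q_gt3).
Local Notation NI2 := (NI2 q_prime q_gt3).
Local Notation NIsq := (NIsq q_prime q_gt3).
Local Notation NIsub := (NIsub q_prime q_gt3).
Local Notation Zsq := (Zsq q_prime q_gt3).
Local Notation Zq0 := (Zq0 q_prime q_gt3).
Local Notation Fq_small := (Fq_small q_prime).
Local Notation Zq := (Zq q).
Local Notation Rd := (@Rd q).

Lemma two0 : (2%:R : F) != 0. Proof. exact: Fq_small. Qed.
Lemma three0 : (3%:R : F) != 0. Proof. exact: Fq_small. Qed.
Lemma c24 : (24%:R : F) != 0.
Proof.
have -> : (24%:R : F) = 2%:R * 2%:R * 2%:R * 3%:R by rewrite -!natrM.
by rewrite !mulf_neq0 ?two0 ?three0.
Qed.
Lemma c48 : (48%:R : F) != 0.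
Proof.
have -> : (48%:R : F) = 2%:R * 24%:R by rewrite -!natrM.
by rewrite !mulf_neq0 ?two0 ?c24.
Qed.
Lemma c24N : ((24%:R : F) == - 24%:R) = false.
Proof.
apply/negP => /eqP h; move: c48; rewrite (_ : 48 = 24 + 24)%N // natrD {1}h addNr.
by rewrite eqxx.
Qed.

Lemma redP0 : redq q P0 = Some (6%:R, 24%:R).
Proof.
rewrite /redq /P0; case: (Rnat 6) => z6 ->; rewrite (negbTE z6).
by case: (Rnat 24) => _ ->.
Qed.

Lemma Rsome x y (s t : F) : Rd x s -> Rd y t -> redq q (Some (x, y)) = Some (s, t).
Proof. by case=> zx <- [_ <-]; rewrite /redq (negbTE zx). Qed.

Lemma Rnone x y : ~~ Zq x -> redq q (Some (x, y)) = None.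
Proof. by rewrite /redq /Zq negbK => ->. Qed.

Lemma tail (x l : rat) (s m : F) : Rd x s -> Rd l m ->
  redq q (Some (l ^+ 2 - a2 rat - 6%:R - x, - (24%:R + l * (l ^+ 2 - a2 rat - 6%:R - x - 6%:R))))
  = Some (m ^+ 2 - a2 F - 6%:R - s, - (24%:R + m * (m ^+ 2 - a2 F - 6%:R - s - 6%:R))).
Proof.
move=> hx hl; have h3 : Rd (l ^+ 2 - a2 rat - 6%:R - x) (m ^+ 2 - a2 F - 6%:R - s).
  by apply: RB => //; apply: RB; [apply: RB; [apply: RX2|apply: (Rnat 8)]|apply: Rnat].
apply: (Rsome h3); apply: RN; apply: RD.
  exact: (Rnat 24).
by apply: RM => //; apply: RB => //; exact: (Rnat 6).
Qed.
Lemma Rd_eq r s t : Rd r s -> s = t -> Rd r t.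
Proof. by move=> h <-. Qed.

Lemma RX3 a (t : F) : Rd a t -> Rd (a ^+ 3) (t ^+ 3).
Proof. by move=> h; rewrite (exprS a 2) (exprS t 2); apply: RM => //; exact: RX2. Qed.

Lemma caseE1 (x y : rat) : y ^+ 2 = fc x -> ~~ Zq x ->
  redq q (addpt P0 (Some (x, y))) = Some (6%:R, 24%:R).
Proof.
move=> hX nz.
have x0 : x != 0 by apply/eqP => e; move: nz; rewrite e Zq0.
have x6 : (6%:R == x) = false.
  by apply/negP => /eqP e; move: nz; rewrite -e; case: (Rnat 6) => ->.
rewrite /addpt /P0 x6 /=.
have hu : Rd (x ^-1) 0 := NI1 nz.
have hw2 : (y / x ^+ 2) ^+ 2 = x^-1 + 8%:R * x^-1 ^+ 2 + 12%:R * x^-1 ^+ 3.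
  by rewrite expr_div_n hX /fc /a2 /a4; field.
have hh : Rd (x^-1 + 8%:R * x^-1 ^+ 2 + 12%:R * x^-1 ^+ 3) 0.
  apply: (@Rd_eq _ (0 + 8%:R * 0 ^+ 2 + 12%:R * 0 ^+ 3)).
    apply: RD; first apply: RD => //.
      by apply: RM; [exact: (Rnat 8)|exact: RX2].
    apply: RM; first exact: (Rnat 12).
    by rewrite !(exprS _ 2); apply: RM => //; exact: RX2.
  by rewrite !expr0n /= !mulr0 !addr0.
have hw : Rd (y / x ^+ 2) 0.
  have zw : Zq (y / x ^+ 2) by apply: Zsq; rewrite hw2; case: hh.
  have := RX2 (conj zw erefl); rewrite hw2 => h; have e := Rfun h.
  split => //; apply/eqP.
  have : ratF q (y / x ^+ 2) ^+ 2 == 0 by rewrite e -(Rfun hh).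
  by rewrite expf_eq0.
move: hu hw hw2; set u := x^-1; set w := y / x ^+ 2 => hu hw hw2.
have ex : x = u ^-1 by rewrite invrK.
have u0 : u != 0 by rewrite invr_eq0.
have ey : y = w / u ^+ 2 by rewrite /w /u exprVn invrK divfK // expf_neq0.
clearbody u w; rewrite ex ey.
have hv : Rd (1 - 6%:R * u) 1.
  apply: Rd_eq; first by apply: RB; [exact: (Rnat 1)|apply: RM; [exact: (Rnat 6)|exact: hu]].
  by rewrite mulr0 subr0.
have v0 : 1 - 6%:R * u != 0.
  have r0 : ratF q 0 = 0 by exact: (esym (Rfun (Rnat 0))).
  apply/eqP => e; move: (Rfun hv); rewrite e r0 => /eqP; by rewrite oner_eq0.
have v0' : u^-1 - 6%:R != 0.
  have -> : u^-1 - 6%:R = (1 - 6%:R * u) / u by field.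
  by rewrite mulf_neq0 // invr_eq0.
set E := (216%:R * u - 48%:R * w - 144%:R * u ^+ 2) / (1 - 6%:R * u) ^+ 2.
have ex3 : ((w / u ^+ 2 - 24%:R) / (u ^-1 - 6%:R)) ^+ 2 - a2 rat - 6%:R - u^-1 = 6%:R + E.
  apply/eqP; rewrite -subr_eq0; apply/eqP.
  have -> : ((w / u ^+ 2 - 24%:R) / (u ^-1 - 6%:R)) ^+ 2 - a2 rat - 6%:R - u^-1 - (6%:R + E)
     = (w ^+ 2 - (u + 8%:R * u ^+ 2 + 12%:R * u ^+ 3)) / (u ^+ 2 * (1 - 6%:R * u) ^+ 2).
    by rewrite /E /a2; field; rewrite ?u0 ?v0 ?v0'.
  by rewrite hw2 subrr mul0r.
rewrite ex3.
set G := ((w - 24%:R * u ^+ 2) * (216%:R - 144%:R * u) - 48%:R * (1 + 8%:R * u + 12%:R * u ^+ 2)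
          + 1152%:R * u * w) / (1 - 6%:R * u) ^+ 3.
have ey3 : (w / u ^+ 2 - 24%:R) / (u ^-1 - 6%:R) * (6%:R + E - 6%:R) = G.
  apply/eqP; rewrite -subr_eq0; apply/eqP.
  have -> : (w / u ^+ 2 - 24%:R) / (u ^-1 - 6%:R) * (6%:R + E - 6%:R) - G
     = - 48%:R * (w ^+ 2 - (u + 8%:R * u ^+ 2 + 12%:R * u ^+ 3)) / (u * (1 - 6%:R * u) ^+ 3).
    by rewrite /E /G; field; rewrite ?u0 ?v0 ?v0'.
  by rewrite hw2 subrr mulr0 mul0r.
rewrite ey3.
have h1 : (1 : F) ^+ 2 != 0 by rewrite expr1n oner_neq0.
have h1' : (1 : F) ^+ 3 != 0 by rewrite expr1n oner_neq0.
have hE := RD (Rnat 6) (Rdiv (RB (RB (RM (Rnat 216) hu) (RM (Rnat 48) hw)) (RM (Rnat 144) (RX2 hu))) (RX2 hv) h1).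
have hG := RN (RD (Rnat 24) (Rdiv (RD (RB (RM (RB hw (RM (Rnat 24) (RX2 hu))) (RB (Rnat 216) (RM (Rnat 144) hu)))
   (RM (Rnat 48) (RD (RD (Rnat 1) (RM (Rnat 8) hu)) (RM (Rnat 12) (RX2 hu))))) (RM (RM (Rnat 1152) hu) hw)) (RX3 hv) h1')).
rewrite /E /G; case: hE => zE ->; case: hG => _ ->; rewrite (negbTE zE).
congr (Some (_, _)).
  have z2 : (0 : F) ^+ 2 = 0 by rewrite expr2 mulr0.
  by rewrite z2 !mulr0 !subr0 expr1n divr1 addr0.
have z2 : (0 : F) ^+ 2 = 0 by rewrite expr2 mulr0.
rewrite z2 !mulr0 !subr0 expr1n divr1 !addr0 mulr1.
ring.
Qed.
End Red.

Section Red2.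
Variable q : nat.
Hypothesis q_prime : prime q.
Hypothesis q_gt3 : (3 < q)%N.
Local Notation F := ('F_q).
Local Notation Rnat := (Rnat q_prime q_gt3).
Local Notation RD := (RD q_prime q_gt3).
Local Notation RB := (RB q_prime q_gt3).
Local Notation RM := (RM q_prime q_gt3).
Local Notation RN := (RN q_prime q_gt3).
Local Notation RV := (RV q_prime q_gt3).
Local Notation RX2 := (RX2 q_prime q_gt3).
Local Notation Rdiv := (Rdiv q_prime q_gt3).
Local Notation NI1 := (NI1 q_prime q_gt3).

Local Notation Zsq := (Zsq q_prime q_gt3).
Local Notation Zq0 := (Zq0 q_prime q_gt3).
Local Notation Fq_small := (Fq_small q_prime).
Local Notation Zq := (Zq q).
Local Notation Rd := (@Rd q).
Local Notation RX3 := (RX3 q_prime q_gt3).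
Local Notation c24N := (c24N q_prime q_gt3).
Local Notation c24 := (c24 q_prime q_gt3).
Local Notation c48 := (c48 q_prime q_gt3).
Local Notation two0 := (two0 q_prime q_gt3).
Local Notation redP0 := (redP0 q_prime q_gt3).
Local Notation tail := (tail q_prime q_gt3).
Local Notation caseE1 := (caseE1 q_prime q_gt3).
Local Notation NI2 := (NI2 q_prime q_gt3).
Local Notation NIsq := (NIsq q_prime q_gt3).
Local Notation NIsub := (NIsub q_prime q_gt3).

Lemma fc_red (x : rat) (s : F) : Rd x s -> Rd (fc x) (fc s).
Proof.
move=> hx; rewrite /fc /a2 /a4.
exact: RD (RD (RX3 hx) (RM (Rnat 8) (RX2 hx))) (RM (Rnat 12) hx).
Qed.

Lemma oncurve_red (x y : rat) : y ^+ 2 = fc x -> Zq x ->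
  [/\ Rd x (ratF q x), Rd y (ratF q y) & (ratF q y) ^+ 2 = fc (ratF q x)].
Proof.
move=> hX zx; have hx : Rd x (ratF q x) by [].
have zy : Zq y by apply: Zsq; rewrite hX; case: (fc_red hx).
have hy : Rd y (ratF q y) by [].
split => //; have := RX2 hy; rewrite hX => h.
by rewrite (Rfun h) -(Rfun (fc_red hx)).
Qed.

Lemma gc_red (x : rat) (s : F) : Rd x s -> Rd (gc 6%:R x) (gc 6%:R s).
Proof.
move=> hx; rewrite /gc /a2 /a4.
exact: RD (RD (RD (RD (RX2 hx) (RM hx (Rnat 6))) (RX2 (Rnat 6))) (RM (Rnat 8) (RD hx (Rnat 6)))) (Rnat 12).
Qed.

Lemma Rtan : Rd ((3%:R * 6%:R ^+ 2 + 2%:R * a2 rat * 6%:R + a4 rat) / (2%:R * 24%:R))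
                ((3%:R * 6%:R ^+ 2 + 2%:R * a2 F * 6%:R + a4 F) / (2%:R * 24%:R)).
Proof.
rewrite /a2 /a4; apply: Rdiv.
- exact: RD (RD (RM (Rnat 3) (RX2 (Rnat 6))) (RM (RM (Rnat 2) (Rnat 8)) (Rnat 6))) (Rnat 12).
- exact: RM (Rnat 2) (Rnat 24).
- by rewrite mulf_neq0 ?two0 ?c24.
Qed.

Lemma y24 (y : rat) (t : F) : Rd y t -> y = 24%:R -> t = 24%:R.
Proof. by move=> hy e; move: hy; rewrite e => /Rfun ->; rewrite -(Rfun (Rnat 24)). Qed.

Lemma y24N (y : rat) (t : F) : Rd y t -> y = - 24%:R -> t = - 24%:R.
Proof. by move=> hy e; move: hy; rewrite e => /Rfun ->; rewrite -(Rfun (RN (Rnat 24))). Qed.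

Lemma c24Nq (r : rat) : Rd r 24%:R -> (r == - r) = false.
Proof.
move=> hr; case: eqP => // e; exfalso.
have h := Rfun (RN hr); rewrite -e -(Rfun hr) in h.
by move: c24N; rewrite {1}h eqxx.
Qed.

Lemma redq_add (X : pt rat) : oncurve X ->
  redq q (addpt P0 X) = addpt (redq q P0) (redq q X).
Proof.
rewrite redP0; case: X => [[x y]|] hX; last first.
  by have -> : addpt P0 None = P0 by []; rewrite redP0.
rewrite /oncurve in hX.
case: (boolP (Zq x)) => zx; last by rewrite caseE1 // (Rnone y zx).
case: (oncurve_red hX zx); set s := ratF q x; set t := ratF q y => hx hy hc.
rewrite (Rsome hx hy) /P0.
case: (boolP (6%:R == s)) => e6.
  move/eqP: e6 => e6.
  have h576 : t ^+ 2 = 24%:R ^+ 2 by rewrite hc -e6 /fc /a2 /a4; ring.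
  have c24N' : (24%:R : F) <> - 24%:R by move=> e; move: c24N; rewrite {1}e eqxx.
  case: (sq_eq h576) => ht.
    rewrite -e6 ht addpt_tan ?c24N //.
    case: (boolP (6%:R == x)) => [/eqP x6 | x6].
      subst x.
      have : y ^+ 2 = 24%:R ^+ 2 by rewrite hX /fc /a2 /a4; ring.
      case/sq_eq => ey; last by exfalso; apply: c24N'; exact: (etrans (esym ht) (y24N hy ey)).
      subst y; rewrite (addpt_tan _ (c24Nq (Rnat 24))); cbv zeta.
      exact: (tail (Rnat 6) Rtan).
    rewrite addpt_chord //.
    have y24' : y + 24%:R != 0.
      apply/eqP => e; have e' : y = - 24%:R by apply/eqP; rewrite -subr_eq0 opprK e.
      by apply: c24N'; exact: (etrans (esym ht) (y24N hy e')).
    have x60 : x - 6%:R != 0 by rewrite subr_eq0 eq_sym.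
    have el : (y - 24%:R) / (x - 6%:R) = gc 6%:R x / (y + 24%:R).
      apply/eqP; rewrite eqr_div //; apply/eqP.
      have -> : (y - 24%:R) * (y + 24%:R) = y ^+ 2 - 24%:R ^+ 2 by ring.
      by rewrite hX /fc /gc /a2 /a4; ring.
    cbv zeta; rewrite el; apply: tail => //.
    apply: (Rd_eq (Rdiv (gc_red hx) (RD hy (Rnat 24)) _)).
      by rewrite ht -natrD c48.
    rewrite -e6 ht /gc /a2 /a4; congr (_ / _); ring.
  rewrite -e6 ht addpt_inv ?opprK //.
  case: (boolP (6%:R == x)) => [/eqP x6 | x6].
    subst x.
    have : y ^+ 2 = 24%:R ^+ 2 by rewrite hX /fc /a2 /a4; ring.
    case/sq_eq => ey; first by exfalso; apply: c24N'; exact: (etrans (esym (y24 hy ey)) ht).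
    subst y; rewrite (addpt_inv _ (esym (opprK _))); reflexivity.
  rewrite addpt_chord //; apply: Rnone.
  have yn : y - 24%:R != 0.
    apply/eqP => e; have e' : y = 24%:R by apply/eqP; rewrite -subr_eq0 e.
    by apply: c24N'; exact: (etrans (esym (y24 hy e')) ht).
  have x60 : x - 6%:R != 0 by rewrite subr_eq0 eq_sym.
  have hinv : Rd (((y - 24%:R) / (x - 6%:R))^-1) 0.
    rewrite invf_div.
    apply: (Rd_eq (Rdiv (RB hx (Rnat 6)) (RB hy (Rnat 24)) _)).
      by rewrite ht -opprD -natrD oppr_eq0 c48.
    by rewrite -e6 subrr mul0r.
  have nl := NI2 (mulf_neq0 yn (invr_neq0 x60)) hinv.
  apply: NIsub; last by case: hx.
  apply: NIsub; last by case: (Rnat 6).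
  apply: NIsub; last by rewrite /a2; case: (Rnat 8).
  exact: NIsq.
have x6 : (6%:R == x) = false.
  apply/negP => /eqP e; move: e6; rewrite /s -e.
  by case: (Rnat 6) => _ ->; rewrite eqxx.
rewrite addpt_chord ?x6 // addpt_chord //.
apply: tail => //; apply: Rdiv; [apply: RB => //; exact: (Rnat 24)
   |apply: RB => //; exact: (Rnat 6)| by rewrite subr_eq0 eq_sym].
Qed.
End Red2.

Section Main.
Variable q : nat.
Hypothesis q_prime : prime q.
Hypothesis q_gt3 : (3 < q)%N.
Local Notation F := ('F_q).
Local Notation redq_add := (redq_add q_prime q_gt3).
Local Notation redP0 := (redP0 q_prime q_gt3).
Local Notation c24 := (c24 q_prime q_gt3).
Local Notation two0 := (two0 q_prime q_gt3).

Definition Qn n := iter n (addpt P0) None.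
Definition Pq := redq q P0.
Definition T n := iter n (addpt Pq) None.

Lemma P0_on : oncurve P0.
Proof. by rewrite /P0 /= /fc /a2 /a4; ring. Qed.

Lemma Pq_on : oncurve Pq.
Proof. by rewrite /Pq redP0 /= /fc /a2 /a4; ring. Qed.

Lemma Qn_on n : oncurve (Qn n).
Proof. elim: n => [|n ih] //; rewrite /Qn iterS; exact: addpt_on P0_on ih. Qed.

Lemma T_on n : oncurve (T n).
Proof. elim: n => [|n ih] //; rewrite /T iterS; exact: addpt_on Pq_on ih. Qed.

Lemma redQ n : redq q (Qn n) = T n.
Proof.
elim: n => [|n ih]; first by rewrite /Qn /T.
rewrite /Qn /T !iterS redq_add -/(Qn n) -/(T n) ?ih //.
exact: Qn_on.
Qed.

Lemma redq_neg X : redq q (negpt X) = negpt (redq q X).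
Proof. by case: X => [[x y]|] //=; case: ifP => //; rewrite ratF_opp. Qed.

Variable O : nat.
Hypothesis TO : T O = None.

Lemma T_add m k : T (m + k * O) = T m.
Proof.
elim: k => [|k ih]; first by rewrite mul0n addn0.
by rewrite mulSnr addnA /T iterD -/(T O) TO -/(T _) ih.
Qed.

Lemma T_mod m : T m = T (m %% O).
Proof. by rewrite {1}(divn_eq m O) addnC T_add. Qed.

Lemma negT m : (m <= O)%N -> negpt (T m) = T (O - m).
Proof.
elim: m => [|m ih] hm; first by rewrite subn0 TO.
have hm' : (m <= O)%N by apply: ltnW.
have e : (O - m = (O - m.+1).+1)%N by rewrite subnSK.
rewrite /T iterS -/(T m) negpt_add -/(T m) ih // e /T iterS -/(T _).
rewrite /Pq redP0 /=.
apply: cancel_add; first by rewrite /fc /a2 /a4; ring.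
  exact: T_on.
by rewrite mulf_neq0 ?two0 ?c24.
Qed.
End Main.

Section Img.
Variable q : nat.
Hypothesis q_prime : prime q.
Hypothesis q_gt3 : (3 < q)%N.
Local Notation F := ('F_q).

Definition onCDd (d : F) (x0 x1 x2 x3 x4 : F) : bool :=
  [|| x0 != 0, x1 != 0, x2 != 0, x3 != 0 | x4 != 0] &&
  [&& x0 ^+ 2 - 2%:R * x1 ^+ 2 + x2 ^+ 2 == 0,
      x1 ^+ 2 - 2%:R * x2 ^+ 2 + d * x3 ^+ 2 == 0 &
      x2 ^+ 2 - 2%:R * d * x3 ^+ 2 + x4 ^+ 2 == 0].

Definition imphib (d : F) (S : pt F) : bool :=
  [exists x0 : F, exists x1 : F, exists x2 : F, exists x3 : F, exists x4 : F,
     onCDd d x0 x1 x2 x3 x4 && (S == phiq q x0 x1 x2 x4)].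

Lemma imphiP (D : int) S : imphi q D S <-> imphib (D%:~R) S.
Proof.
split.
  case=> x0 [x1 [x2 [x3 [x4 [h e]]]]].
  apply/existsP; exists x0; apply/existsP; exists x1; apply/existsP; exists x2.
  apply/existsP; exists x3; apply/existsP; exists x4.
  by rewrite e eqxx andbT; exact: h.
case/existsP => x0 /existsP [x1 /existsP [x2 /existsP [x3 /existsP [x4 /andP [h /eqP e]]]]].
by exists x0, x1, x2, x3, x4.
Qed.

Lemma scale1 (d c : F) S : c != 0 -> imphib d S -> imphib (d * c ^+ 2) S.
Proof.
move=> c0.
case/existsP => x0 /existsP [x1 /existsP [x2 /existsP [x3 /existsP [x4 /andP [h e]]]]].
apply/existsP; exists x0; apply/existsP; exists x1; apply/existsP; exists x2.
apply/existsP; exists (x3 / c); apply/existsP; exists x4.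
rewrite e andbT; move: h; rewrite /onCDd.
have -> : (x3 / c != 0) = (x3 != 0) by rewrite mulf_eq0 invr_eq0 (negbTE c0) orbF.
have -> : d * c ^+ 2 * (x3 / c) ^+ 2 = d * x3 ^+ 2 by field.
by have -> : 2%:R * (d * c ^+ 2) * (x3 / c) ^+ 2 = 2%:R * d * x3 ^+ 2 by field.
Qed.

Lemma scale_iff (d c : F) S : c != 0 -> imphib d S = imphib (d * c ^+ 2) S.
Proof.
move=> c0; apply/idP/idP; first exact: scale1.
move=> h; have := scale1 (c := c^-1) (invr_neq0 c0) h.
by rewrite -mulrA -exprMn (mulfV c0) expr1n mulr1.
Qed.

Lemma neg1 (d : F) S : imphib d S -> imphib d (negpt S).
Proof.
case/existsP => x0 /existsP [x1 /existsP [x2 /existsP [x3 /existsP [x4 /andP [h /eqP e]]]]].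
apply/existsP; exists (- x0); apply/existsP; exists x1; apply/existsP; exists x2.
apply/existsP; exists x3; apply/existsP; exists x4.
apply/andP; split.
  by move: h; rewrite /onCDd oppr_eq0 sqrrN.
rewrite e /phiq; case: ifP => _; first by rewrite eqxx.
by rewrite sqrrN !mulrN !mulNr eqxx.
Qed.

Lemma negptK (S : pt F) : negpt (negpt S) = S.
Proof. by case: S => [[x y]|] //=; rewrite opprK. Qed.

Lemma neg_iff (d : F) S : imphib d (negpt S) = imphib d S.
Proof.
apply/idP/idP => h; last exact: neg1.
by rewrite -(negptK S); apply: neg1.
Qed.

Definition nu : F := odflt 1 [pick x : F | ~~ [exists y, y ^+ 2 == x]].
Definition cls (D : int) : F := if legendre q D == 1 then 1 else nu.

Lemma class_iff (D : int) S : ~~ (q%:Z %| D)%Z -> imphib (D%:~R) S = imphib (cls D) S.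
Proof.
move=> hD.
have D0 : (D%:~R : F) != 0 by rewrite Fq_int0.
rewrite /cls /legendre (negbTE hD).
case: (boolP [exists x : F, x ^+ 2 == D%:~R]) => hsq /=.
  case/existsP: hsq => c /eqP hc.
  have c0 : c != 0 by apply: contraNneq D0 => c0; rewrite -hc c0 expr0n.
  by rewrite -hc (scale_iff 1 S c0) mul1r.
rewrite /nu; case: pickP => [n hn | hnone] /=.
  case: (sqclass hsq hn) => c [c0 ->].
  by rewrite -scale_iff.
exfalso; have h := hnone (D%:~R); move/negP: hsq; apply.
by move/negbT: h; rewrite negbK.
Qed.
End Img.


Lemma valk (q : nat) (q_prime : prime q) (q_gt3 : (3 < q)%N) (p : nat)
  (TO : T q p.+2 = None) (k : int) :
  redq q (mulpt k P0) = T q (val (k%:~R : 'Z_p.+2)).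
Proof.
have p1 : (1 < p.+2)%N by [].
case: k => n.
  have -> : mulpt (Posz n) P0 = Qn n by [].
  rewrite (redQ q_prime q_gt3) (T_mod TO n).
  by rewrite -(val_Zp_nat p1 n).
have -> : mulpt (Negz n) P0 = negpt (Qn n.+1) by [].
rewrite redq_neg (redQ q_prime q_gt3) NegzE mulrNz.
have hv : val ((n.+1)%:R : 'Z_p.+2) = (n.+1 %% p.+2)%N := val_Zp_nat p1 n.+1.
have -> : val (- ((n.+1)%:R : 'Z_p.+2)) = ((p.+2 - (n.+1 %% p.+2)) %% p.+2)%N.
  by rewrite -hv.
rewrite -(T_mod TO) (T_mod TO n.+1) (negT q_prime q_gt3 TO) //.
exact: ltnW (ltn_pmod _ _).
Qed.

Unset Implicit Arguments.
Theorem proposition6p4 (q : nat) (q_prime : prime q) (q_gt3 : (3 < q)%N) :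
  (forall D D' : int, squarefreez D -> squarefreez D' ->
     ~~ (q%:Z %| D)%Z -> ~~ (q%:Z %| D')%Z ->
     legendre q D = legendre q D' ->
     forall R : pt rat, HDq q D R <-> HDq q D' R)
  /\
  (forall O : nat, is_orderP q O ->
   exists M1 Mm1 : {set 'Z_O},
     (forall D : int, squarefreez D -> ~~ (q%:Z %| D)%Z ->
        forall R : pt rat,
          HDq q D R <->
          exists k : int, [/\ oddz k, R = mulpt k P0 &
             (k%:~R : 'Z_O) \in (if legendre q D == 1 then M1 else Mm1)])
     /\ (1 : 'Z_O) \in M1
     /\ (forall k : 'Z_O, k \in M1 -> - k \in M1)
     /\ (forall k : 'Z_O, k \in Mm1 -> - k \in Mm1)).
Proof.
have HDqE D R : ~~ (q%:Z %| D)%Z -> HDq q D R <-> inH R /\ imphib (cls q D) (redq q R).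
  move=> hD; rewrite /HDq -(class_iff q_prime _ hD).
  by split=> -[h1 h2]; split => //; apply/imphiP.
split.
  move=> D D' _ _ hD hD' hL R; rewrite (HDqE D R hD) (HDqE D' R hD').
  by rewrite /cls hL.
move=> O [O0 [TO _]].
have TO' : T q O = None by exact: TO.
case: O O0 TO TO' => [|[|p]] // O0 _ TO.
  by move: TO; rewrite /T /= /Pq (redP0 q_prime q_gt3).
pose M1 := [set m : 'Z_p.+2 | imphib 1 (T q (val m))].
pose Mm1 := [set m : 'Z_p.+2 | imphib (nu q) (T q (val m))].
have symm d (m : 'Z_p.+2) : imphib d (T q (val m)) -> imphib d (T q (val (- m))).
  have -> : val (- m) = ((p.+2 - val m) %% p.+2)%N by [].
  rewrite -(T_mod TO) -(negT q_prime q_gt3 TO); last exact: ltnW (ltn_ord m).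
  by rewrite neg_iff.
exists M1, Mm1; split; last split; last split.
- move=> D _ hD R; rewrite (HDqE D R hD).
  have memE (k : int) : ((k%:~R : 'Z_p.+2) \in (if legendre q D == 1 then M1 else Mm1))
      = imphib (cls q D) (redq q (mulpt k P0)).
    by rewrite (valk q_prime q_gt3 TO) /cls; case: ifP => _; rewrite inE.
  split.
    by case=> -[k [ok ->]] h; exists k; split => //; rewrite memE.
  by case=> k [ok -> h]; split; [exists k | rewrite -memE].
- rewrite inE.
  have -> : val (1 : 'Z_p.+2) = 1%N by rewrite /= modn_small.
  rewrite /T /= /Pq (redP0 q_prime q_gt3).
  apply/existsP; exists 1; apply/existsP; exists 1; apply/existsP; exists 1.
  apply/existsP; exists 1; apply/existsP; exists 1.
  apply/andP; split.
    apply/andP; split; first by rewrite oner_neq0.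
    by apply/and3P; split; apply/eqP; ring.
  by rewrite /phiq oner_eq0 !expr1n !mulr1 !divr1.
- by move=> k; rewrite !inE; exact: symm.
- by move=> k; rewrite !inE; exact: symm.
Qed.
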